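(* Let $X$ be a $T_1$ space with $|X|<\mathfrak b$. Then $X$ is set strongly star Hurewicz if and only if $e(X)=\omega$.
   Context: For a family $\mathcal U$ of subsets of $X$ and $A\subseteq X$, $st(A,\mathcal U)=\bigcup\{U\in\mathcal U: U\cap A\neq\emptyset\}$. $X$ is set strongly star Hurewicz if for every nonempty $A\subseteq X$ and every sequence $(\mathcal U_n:n\in\omega)$ of families of open sets with $\overline A\subseteq\bigcup\mathcal U_n$ for all $n$, there are finite $F_n\subseteq\overline A$ such that each $x\in A$ lies in $st(F_n,\mathcal U_n)$ for all but finitely many $n$. $e(X)$ is the supremum of cardinalities of closed discrete subsets ($e(X)=\omega$ means all closed discrete subsets are countable). $\mathfrak b$ is the minimal cardinality of a $\leq^*$-unbounded subset of $\omega^\omega$. *)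

(* Defs.v *)
From HB Require Import structures.
From mathcomp Require Import all_boot all_order all_algebra.
From mathcomp Require Import all_classical all_reals all_analysis.
Set Implicit Arguments. Unset Strict Implicit. Unset Printing Implicit Defensive.
Local Open Scope classical_set_scope.
Local Open Scope card_scope.

Definition leq_star (f g : nat -> nat) : Prop :=
  exists N, forall n, (N <= n)%N -> (f n <= g n)%N.

Definition unbounded_family (F : set (nat -> nat)) : Prop :=
  forall g, exists2 f, F f & ~ leq_star f g.

(* |T| < b : no unbounded family has cardinality <= |T|
   (b = minimal cardinality of an unbounded family) *)
Definition card_lt_b (T : Type) : Prop :=
  forall F : set (nat -> nat), unbounded_family F -> ~ (F #<= [set: T]).

Definition star {T : Type} (A : set T) (U : set (set T)) : set T :=
  [set x | exists2 V, U V & V `&` A !=set0 /\ V x].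

Definition open_family {T : topologicalType} (U : set (set T)) : Prop :=
  forall V, U V -> open V.

Definition set_strongly_star_Hurewicz (T : topologicalType) : Prop :=
  forall (A : set T) (U : nat -> set (set T)),
    A !=set0 ->
    (forall n, open_family (U n)) ->
    (forall n, closure A `<=` \bigcup_(V in U n) V) ->
    exists F : nat -> set T,
      (forall n, finite_set (F n) /\ F n `<=` closure A) /\
      (forall x, A x -> exists N, forall n, (N <= n)%N -> star (F n) (U n) x).

Definition closed_discrete {T : topologicalType} (D : set T) : Prop :=
  closed D /\ forall x, D x -> exists U, open U /\ U x /\ U `&` D = [set x].

Definition extent_omega (T : topologicalType) : Prop :=
  forall D : set T, closed_discrete D -> countable D.

(* Main.v *)
Require Import Defs.
From HB Require Import structures.
From mathcomp Require Import all_boot all_order all_algebra.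
From mathcomp Require Import all_classical all_reals all_analysis.
Local Open Scope classical_set_scope.

Lemma kernel (X : topologicalType) (C : set X) (U : set (set X)) :
  accessible_space X -> closed C -> open_family U ->
  C `<=` \bigcup_(V in U) V ->
  exists D, D `<=` C /\ closed_discrete D /\ C `<=` star D U.
Proof.
move=> T1 Ccl Uo Ccov.
pose P := [set D : set X | D `<=` C /\
  forall V, U V -> forall a b, D a -> D b -> V a -> V b -> a = b].
have [D [[DC Dsep] Dmax]] : exists D, P D /\ forall B, D `<` B -> ~ P B.
  apply: Zorn_bigcup => F FP Ftot; split.
    by move=> x [Y FY Yx]; exact: (FP Y FY).1 x Yx.
  move=> V UV a b [Y FY Ya] [Z FZ Zb] Va Vb.
  have [YZ|ZY] := Ftot Y Z FY FZ.
    exact: (FP Z FZ).2 V UV a b (YZ a Ya) Zb Va Vb.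
  exact: (FP Y FY).2 V UV a b Ya (ZY b Zb) Va Vb.
have Dcov : C `<=` star D U.
  move=> z Cz; apply/not_notP => Hn.
  have nDz : ~ D z.
    move=> Dz; apply: Hn; have [V UV Vz] := Ccov z Cz.
    by exists V => //; split => //; exists z.
  apply: (Dmax (D `|` [set z])).
    split; first by move=> x Dx; left.
    by move=> /(_ z (or_intror erefl)).
  split; first by move=> x [/DC|->].
  move=> V UV a b [Da|->] [Db|->] Va Vb.
  - exact: Dsep V UV a b Da Db Va Vb.
  - by exfalso; apply: Hn; exists V => //; split => //; exists a.
  - by exfalso; apply: Hn; exists V => //; split => //; exists b.
  - by [].
exists D; split => //; split => //; split.
  move=> p clp; apply/not_notP => nDp.
  have [Cp|nCp] := pselect (C p); last first.
    have : nbhs p (~` C) by apply: open_nbhs_nbhs; split => //; rewrite openC.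
    by move=> /clp [x [/DC Cx nCx]].
  have [V UV Vp] := Ccov p Cp.
  have [[d [Vd Dd]]|nd] := pselect (V `&` D !=set0); last first.
    have : nbhs p V by apply: open_nbhs_nbhs; split => //; exact: Uo.
    by move=> /clp [x [Dx Vx]]; apply: nd; exists x.
  have : nbhs p (V `&` ~` [set d]).
    apply: open_nbhs_nbhs; split; last by split => // pd; apply: nDp; rewrite pd.
    apply: openI; first exact: Uo.
    by rewrite openC; exact: accessible_closed_set1.
  move=> /clp [x [Dx [Vx xd]]]; apply: xd; exact: Dsep V UV x d Dx Dd Vx Vd.
move=> x Dx; have [V UV Vx] := Ccov x (DC x Dx).
exists V; split; first exact: Uo.
split => //; apply/seteqP; split => [y [Vy Dy]|y ->].
  exact: Dsep V UV y x Dy Dx Vy Vx.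
by [].
Qed.

Lemma dir1 (X : topologicalType) :
  set_strongly_star_Hurewicz X -> extent_omega X.
Proof.
move=> H D [Dcl Ddisc].
have [->|/eqP/set0P[x0 Dx0]] := pselect (D = set0).
  by apply: finite_set_countable; exact: finite_set0.
have /choice[W HW] : forall x, exists W : set X,
    D x -> open W /\ W x /\ W `&` D = [set x].
  by move=> x; have [/Ddisc[W HW]|nD] := pselect (D x); [exists W|exists setT].
pose U0 := [set V | exists2 x, D x & V = W x].
have clD : closure D = D by apply/esym; apply/closure_id.
have [|||F [HF1 HF2]] := H D (fun _ => U0).
- by exists x0.
- by move=> n V [x Dx ->]; exact: (HW x Dx).1.
- move=> n x; rewrite clD => Dx; exists (W x); first by exists x.
  exact: (HW x Dx).2.1.
have sub : D `<=` \bigcup_(N in [set: nat]) F N.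
  move=> x Dx; have [N HN] := HF2 x Dx.
  have [V [y Dy ->] [[z [Wz Fz]] Wx]] := HN N (leqnn N).
  have Dz : D z by rewrite -clD; exact: (HF1 N).2 z Fz.
  have Dyz : [set y] z by rewrite -(HW y Dy).2.2.
  have Dyx : [set y] x by rewrite -(HW y Dy).2.2.
  by exists N => //; rewrite Dyx -Dyz.
apply: sub_countable (subset_card_le sub) _.
apply: bigcup_countable; first exact: card_lexx.
by move=> n _; apply: finite_set_countable; exact: (HF1 n).1.
Qed.

Lemma dir2 (X : topologicalType) :
  accessible_space X -> card_lt_b X ->
  extent_omega X -> set_strongly_star_Hurewicz X.
Proof.
move=> T1 Hb He A U [a Aa] Uo Ucov.
have /choice[D HD] : forall n, exists D, D `<=` closure A /\
    closed_discrete D /\ closure A `<=` star D (U n).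
  move=> n; apply: kernel => //; exact: closed_closure.
have /choice[e He'] : forall n, exists e : nat -> X, D n = e @` setT.
  move=> n; have [_ [/He /pfcard_geP[D0|/surjfunPex//] cov]] := HD n.
  have := cov a (subset_closure Aa).
  by rewrite D0 => -[V _ [[z [_ []]]]].
have /choice[h Hh] : forall x, exists k : nat -> nat,
    A x -> forall n, star [set e n (k n)] (U n) x.
  move=> x; have /choice[k Hk] : forall n, exists k, A x -> star [set e n k] (U n) x.
    move=> n; have [Ax|nAx] := pselect (A x); last by exists 0.
    have [V UV [[d [Vd Dd]] Vx]] := (HD n).2.2 x (subset_closure Ax).
    move: Dd; rewrite He' => -[k _ ekd]; exists k => _.
    by exists V => //; split => //; exists d; split => //.
  by exists k => Ax n; exact: Hk.
have [g Hg] : exists g, forall f, (h @` A) f -> leq_star f g.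
  apply/not_notP => Hn.
  apply: (Hb (h @` A)).
    move=> g; have /existsNP[f /not_implyP[Ff nl]] :
      ~ forall f, (h @` A) f -> leq_star f g by move=> H'; apply: Hn; exists g.
    by exists f.
  apply: card_le_trans (card_image_le h A) _.
  exact: subset_card_le.
exists (fun n => e n @` `I_(g n).+1); split.
  move=> n; split; first exact/finite_image/finite_II.
  by move=> _ [k _ <-]; apply: (HD n).1; rewrite He'; exists k.
move=> x Ax; have [N HN] := Hg (h x) (ex_intro2 _ _ x Ax erefl).
exists N => n Nn; have [V UV [[z [Vz ze]] Vx]] := Hh x Ax n.
exists V => //; split => //; exists (e n (h x n)); split; first by rewrite -ze.
by exists (h x n) => //=; rewrite ltnS; exact: HN.
Qed.

Theorem corollary4p1 (X : topologicalType) :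
  accessible_space X -> card_lt_b X ->
  (set_strongly_star_Hurewicz X <-> extent_omega X).
Proof.
move=> T1 Hb; split; first exact: dir1.
exact: dir2.
Qed.
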